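(* Let $p\ge 1$, let $F:\mathbb{R}^p\to\mathbb{R}^p$ and $G(\boldsymbol{x}) := F(\boldsymbol{x})-\boldsymbol{x}$, and let $\boldsymbol{x}^\ast\in\mathbb{R}^p$. Assume (A1): $G$ is differentiable in an open convex set $D$ containing $\boldsymbol{x}^\ast$, $G(\boldsymbol{x}^\ast)=0$, $dG(\boldsymbol{x}^\ast)$ is non-singular, and for some constants $d>0$ and $K$, $\|dG(\boldsymbol{x})-dG(\boldsymbol{x}^\ast)\|\le K\|\boldsymbol{x}-\boldsymbol{x}^\ast\|^d$ for all $\boldsymbol{x}\in D$. Suppose there exist a constant $\mu_2\ge 0$, a non-singular symmetric matrix $M\in\mathbb{R}^{p\times p}$, and a neighborhood $N'$ of $(\boldsymbol{x}^\ast,dG(\boldsymbol{x}^\ast)^{-1})$ such that for all $(\boldsymbol{x},H)\in N'$, with $\boldsymbol{v}=G(F(\boldsymbol{x}))-G(\boldsymbol{x})\neq 0$, $$\frac{\|M\boldsymbol{v}-M^{-1}\boldsymbol{v}\|}{\|M^{-1}\boldsymbol{v}\|}\le\mu_2\|\boldsymbol{v}\|^d.$$ Then the updates $\bar{\boldsymbol{x}}=\boldsymbol{x}-HG(\boldsymbol{x})$ and $\bar H=H-H\frac{\boldsymbol{v}\boldsymbol{v}^T}{\boldsymbol{v}^T\boldsymbol{v}}+\frac{\boldsymbol{u}\boldsymbol{v}^T}{\boldsymbol{v}^T\boldsymbol{v}}$ are well-defined in a neighborhood $N$ of $(\boldsymbol{x}^\ast,dG(\boldsymbol{x}^\ast)^{-1})$,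 and the corresponding iteration $\boldsymbol{x}_{k+1}=\boldsymbol{x}_k-H_kG(\boldsymbol{x}_k)$, $H_{k+1}=\bar H$ evaluated at $(\boldsymbol{x}_k,H_k)$, is locally convergent to $\boldsymbol{x}^\ast$: there exist $\epsilon>0$, $\delta>0$ such that whenever $\|\boldsymbol{x}_0-\boldsymbol{x}^\ast\|<\epsilon$ and $\|H_0-dG(\boldsymbol{x}^\ast)^{-1}\|_M<\delta$, the iteration is well-defined and $\boldsymbol{x}_k\to\boldsymbol{x}^\ast$.
   Context: $F$ is a majorization–minimization (MM) algorithm map and $G$ its residual; $dG$ denotes the Jacobian of $G$. $\|\cdot\|$ is a chosen vector norm on $\mathbb{R}^p$ and, for matrices, its induced operator norm; $\|A\|_M:=\|MAM\|_F$ with $\|\cdot\|_F$ the Frobenius norm. For a pair $(\boldsymbol{x},H)$, $\boldsymbol{u}=F(\boldsymbol{x})-\boldsymbol{x}$ and $\boldsymbol{v}=G(F(\boldsymbol{x}))-G(\boldsymbol{x})$. Standing assumption: the MM map is locally convergent to $\boldsymbol{x}^\ast$ in a neighborhood $S$ of $\boldsymbol{x}^\ast$ with linear rate $\tau$, i.e. $\|F(\boldsymbol{x})-\boldsymbol{x}^\ast\|\le\tau\|\boldsymbol{x}-\boldsymbol{x}^\ast\|$ for all $\boldsymbol{x}\in S$, with $\tau\in(0,1)$. *)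

(* Defs.v *)
From HB Require Import structures.
From mathcomp Require Import all_boot all_order all_algebra.
From mathcomp Require Import all_classical all_reals all_analysis.
Set Implicit Arguments. Unset Strict Implicit. Unset Printing Implicit Defensive.
Import Order.TTheory GRing.Theory Num.Theory.
Import numFieldNormedType.Exports.
Local Open Scope ring_scope.
Local Open Scope classical_set_scope.

Definition is_vnorm (R : realType) (p : nat) (nv : 'cV[R]_p -> R) : Prop :=
  [/\ forall x, 0 <= nv x,
      forall x, nv x = 0 -> x = 0,
      forall (a : R) x, nv (a *: x) = `|a| * nv x &
      forall x y, nv (x + y) <= nv x + nv y].

Definition opnorm (R : realType) (p : nat) (nv : 'cV[R]_p -> R) (A : 'M[R]_p) : R :=
  sup [set nv (A *m x) | x in [set x : 'cV[R]_p | nv x = 1]].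

Definition frob (R : realType) (p : nat) (A : 'M[R]_p) : R :=
  Num.sqrt (\sum_(i < p) \sum_(j < p) A i j ^+ 2).

Definition Mnorm (R : realType) (p : nat) (M A : 'M[R]_p) : R := frob (M *m A *m M).

Definition resid (R : realType) (p : nat) (F : 'cV[R]_p -> 'cV[R]_p) (x : 'cV[R]_p) :=
  F x - x.

Definition jac (R : realType) (p : nat) (G : 'cV[R]_p -> 'cV[R]_p) (x : 'cV[R]_p)
  : 'M[R]_p := \matrix_(i < p, j < p) ('d G (x : 'cV[R]_p) (delta_mx j 0) : 'cV[R]_p) i 0.

Definition uvec (R : realType) (p : nat) (F : 'cV[R]_p -> 'cV[R]_p) x := F x - x.
Definition vvec (R : realType) (p : nat) (F : 'cV[R]_p -> 'cV[R]_p) x :=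
  resid F (F x) - resid F x.

Definition xbar (R : realType) (p : nat) (F : 'cV[R]_p -> 'cV[R]_p) x (H : 'M[R]_p) :=
  x - H *m resid F x.

Definition Hbar (R : realType) (p : nat) (F : 'cV[R]_p -> 'cV[R]_p) x (H : 'M[R]_p)
  : 'M[R]_p :=
  let u := uvec F x in let v := vvec F x in
  let s := ((v^T *m v) 0 0) in
  H - s^-1 *: (H *m (v *m v^T)) + s^-1 *: (u *m v^T).

Fixpoint iterQN (R : realType) (p : nat) (F : 'cV[R]_p -> 'cV[R]_p)
  (x0 : 'cV[R]_p) (H0 : 'M[R]_p) (k : nat) : 'cV[R]_p * 'M[R]_p :=
  match k with
  | 0 => (x0, H0)
  | k'.+1 => let xH := iterQN F x0 H0 k' in
             (xbar F xH.1 xH.2, Hbar F xH.1 xH.2)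
  end.

(* Main.v *)
Require Import Defs.
From HB Require Import structures.
From mathcomp Require Import all_boot all_order all_algebra.
From mathcomp Require Import all_classical all_reals all_analysis.
From mathcomp Require Import ring lra.
Import Order.TTheory GRing.Theory Num.Theory.
Import numFieldNormedType.Exports.
Local Open Scope ring_scope.
Local Open Scope classical_set_scope.
Set Implicit Arguments. Unset Strict Implicit. Unset Printing Implicit Defensive.
Section VN.
Variables (R : realType) (p : nat) (nv : 'cV[R]_p -> R).
Hypothesis hnv : is_vnorm nv.

Lemma nv_ge0 x : 0 <= nv x. Proof. by case: hnv. Qed.
Lemma nv_eq0 x : nv x = 0 -> x = 0. Proof. by case: hnv => _ h _ _; apply: h. Qed.
Lemma nvZ a x : nv (a *: x) = `|a| * nv x. Proof. by case: hnv. Qed.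
Lemma nvD x y : nv (x + y) <= nv x + nv y. Proof. by case: hnv. Qed.
Lemma nv0 : nv 0 = 0.
Proof. by rewrite -(scale0r (0 : 'cV[R]_p)) nvZ normr0 mul0r. Qed.
Lemma nvN x : nv (- x) = nv x.
Proof. by rewrite -scaleN1r nvZ normrN normr1 mul1r. Qed.
Lemma nvB x y : nv (x - y) = nv (y - x).
Proof. by rewrite -opprB nvN. Qed.
Lemma nv_sum (I : Type) (r : seq I) (P : pred I) (f : I -> 'cV[R]_p) :
  nv (\sum_(i <- r | P i) f i) <= \sum_(i <- r | P i) nv (f i).
Proof.
apply: (big_rec2 (fun y1 y2 => nv y1 <= y2)); first by rewrite nv0.
move=> i y1 y2 Pi IH; exact: le_trans (nvD _ _) (lerD (lexx _) IH).
Qed.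
Lemma nv_lip x y : `|nv x - nv y| <= nv (x - y).
Proof.
have h1 := nvD (y - x) x; rewrite subrK nvB in h1.
have h2 := nvD (x - y) y; rewrite subrK in h2.
rewrite ler_norml; apply/andP; split; lra.
Qed.
Lemma nv_tri3 x y z : nv (x - z) <= nv (x - y) + nv (y - z).
Proof. by have := nvD (x - y) (y - z); rewrite addrA subrK. Qed.
End VN.

Lemma entry_le (R : realType) m n (A : 'M[R]_(m, n)) i j : `|A i j| <= `|A|.
Proof.
rewrite [leRHS]/Num.norm /= mx_normrE; apply/bigmax_geP; right => /=.
by exists (i, j).
Qed.

Lemma mxnorm_le (R : realType) m n (A : 'M[R]_(m, n)) c :
  0 <= c -> (forall i j, `|A i j| <= c) -> `|A| <= c.
Proof.
move=> c0 H; rewrite [leLHS]/Num.norm /= mx_normrE; by apply/bigmax_leP; split => // ij _; exact: H.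
Qed.

Lemma tr_norm (R : realType) m n (A : 'M[R]_(m, n)) : `|A^T| = `|A|.
Proof.
apply/le_anti/andP; split; apply: mxnorm_le => // i j; rewrite ?mxE.
  exact: (entry_le A j i).
by have := entry_le A^T j i; rewrite mxE.
Qed.

Section VN2.
Variables (R : realType) (p : nat) (nv : 'cV[R]_p -> R).
Hypothesis hnv : is_vnorm nv.

Lemma nv_up : exists2 c, 0 < c & forall x, nv x <= c * `|x|.
Proof.
exists (1 + \sum_i \sum_j nv (delta_mx i j)).
  rewrite ltr_pwDl // sumr_ge0 // => i _; rewrite sumr_ge0 // => j _.
  exact: nv_ge0.
move=> x.
have H : nv x <= \sum_i \sum_j `|x| * nv (delta_mx i j).
  rewrite {1}(matrix_sum_delta x); apply: le_trans (nv_sum hnv _ _ _) _.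
  apply: ler_sum => i _; apply: le_trans (nv_sum hnv _ _ _) _.
  apply: ler_sum => j _; rewrite (nvZ hnv).
  by apply: ler_wpM2r; [exact: nv_ge0 | exact: entry_le].
apply: le_trans H _.
rewrite (eq_bigr (fun i => `|x| * \sum_j nv (delta_mx i j))); last first.
  by move=> i _; rewrite mulr_sumr.
rewrite -mulr_sumr mulrC ler_wpM2r //.
by rewrite lerDr.
Qed.
End VN2.

Lemma lip_continuous (R : realType) (V : normedModType R) (f : V -> R) (c : R) :
  0 < c -> (forall a b, `|f a - f b| <= c * `|a - b|) -> continuous f.
Proof.
move=> c0 hf v; apply/cvgrPdist_lt => e e0.
near=> w.
apply: le_lt_trans (hf _ _) _.
rewrite -ltr_pdivlMl //.
near: w.
by apply: cvgr_dist_lt => //; rewrite mulr_gt0 // invr_gt0.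
Unshelve. all: by end_near.
Qed.

Section VN3.
Variables (R : realType) (p : nat) (nv : 'cV[R]_p -> R).
Hypothesis hnv : is_vnorm nv.
Hypothesis p_gt0 : (0 < p)%N.

Lemma nv_low : exists2 c, 0 < c & forall x, `|x| <= c * nv x.
Proof.
have [c2 c2_gt0 hc2] := nv_up hnv.
pose f (v : 'rV[R]_p) := nv (v^T).
pose A := [set v : 'rV[R]_p | `|v| = 1].
have fc : continuous f.
  apply: (@lip_continuous _ _ _ c2) => // a b.
  apply: le_trans (nv_lip hnv _ _) _.
  by rewrite -linearB /= -(tr_norm (a - b)); apply: hc2.
have A0 : A !=set0.
  pose v0 : 'rV[R]_p := const_mx 1.
  have v0n : v0 != 0.
    apply/eqP => /matrixP /(_ 0 (Ordinal p_gt0)); rewrite !mxE => /eqP.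
    by rewrite oner_eq0.
  exists (`|v0|^-1 *: v0); rewrite /A /= normrZ ger0_norm ?invr_ge0 //.
  by rewrite mulVf // normr_eq0.
have Acl : closed A.
  have -> : A = (fun v : 'rV[R]_p => `|v|) @^-1` [set x : R | x = 1] by [].
  apply: preimage_closed; last exact: closed_eq.
  by move=> x _; exact: norm_continuous.
have Abd : \forall M \near +oo, globally A [set x : 'rV[R]_p | `|x| <= M].
  near=> M => v /= ->.
  near: M; exact: nbhs_pinfty_ge.
have cA := bounded_closed_compact Abd Acl.
have [c cA' hmin] := EVT_min_rV A0 cA (continuous_subspaceT fc).
have c1 : `|c| = 1 by move: cA'; rewrite inE.
have m_gt0 : 0 < f c.
  rewrite lt_def nv_ge0 // andbT; apply/eqP => /(nv_eq0 hnv) /eqP.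
  rewrite -[0]trmx0 (inj_eq (@trmx_inj _ _ _)) => /eqP c0.
  by move: c1; rewrite c0 normr0 => /eqP; rewrite eq_sym oner_eq0.
exists (f c)^-1; first by rewrite invr_gt0.
move=> x; have [->|x0] := eqVneq x 0; first by rewrite normr0 mulr_ge0 ?invr_ge0 ?nv_ge0 // ltW.
have nx : 0 < `|x| by rewrite normr_gt0.
have nxi : 0 <= `|x|^-1 by rewrite invr_ge0 ltW.
have hx1 : (`|x|^-1 *: x)^T \in A.
  rewrite inE /A /= tr_norm normrZ ger0_norm //.
  by rewrite mulVf // gt_eqF.
have := hmin _ hx1.
rewrite /f trmxK (nvZ hnv) ger0_norm // => h.
have h2 : f c * `|x| <= nv x.
  by move: h; rewrite mulrC -ler_pdivlMr ?invr_gt0 // invrK.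
by rewrite ler_pdivlMl // mulrC.
Unshelve. all: by end_near.
Qed.
End VN3.

Section Euclid.
Variables (R : realType) (p : nat).
Implicit Types (x y z v w : 'cV[R]_p) (A B : 'M[R]_p).

Definition ip x y : R := \sum_i x i 0 * y i 0.
Definition qn x := ip x x.
Definition en x := Num.sqrt (qn x).

Lemma ipC x y : ip x y = ip y x.
Proof. by apply: eq_bigr => i _; rewrite mulrC. Qed.
Lemma ipDl x y z : ip (x + y) z = ip x z + ip y z.
Proof. by rewrite /ip -big_split; apply: eq_bigr => i _; rewrite mxE mulrDl. Qed.
Lemma ipZl a x y : ip (a *: x) y = a * ip x y.
Proof. by rewrite /ip mulr_sumr; apply: eq_bigr => i _; rewrite mxE mulrA. Qed.
Lemma ipNl x y : ip (- x) y = - ip x y.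
Proof. by rewrite -scaleN1r ipZl mulN1r. Qed.
Lemma ipBl x y z : ip (x - y) z = ip x z - ip y z.
Proof. by rewrite ipDl ipNl. Qed.
Lemma ipDr x y z : ip z (x + y) = ip z x + ip z y.
Proof. by rewrite ipC ipDl !(ipC z). Qed.
Lemma ipZr a x y : ip y (a *: x) = a * ip y x.
Proof. by rewrite ipC ipZl ipC. Qed.
Lemma ipBr x y z : ip z (x - y) = ip z x - ip z y.
Proof. by rewrite ipC ipBl !(ipC z). Qed.

Lemma qn_ge0 x : 0 <= qn x.
Proof. by apply: sumr_ge0 => i _; rewrite -expr2 sqr_ge0. Qed.
Lemma en_ge0 x : 0 <= en x. Proof. exact: sqrtr_ge0. Qed.
Lemma en_sqr x : en x ^+ 2 = qn x. Proof. by rewrite sqr_sqrtr // qn_ge0. Qed.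

Lemma qn_eq0 x : qn x = 0 -> x = 0.
Proof.
move=> h; apply/matrixP => i j; rewrite ord1 mxE.
have hk : forall k : 'I_p, 0 <= x k 0 * x k 0.
  by move=> k; rewrite -expr2 sqr_ge0.
have := @psumr_eq0P _ _ xpredT (fun i => x i 0 * x i 0) (fun k _ => hk k) h i isT.
by move/eqP; rewrite mulf_eq0 orbb => /eqP.
Qed.

Lemma CS x y : ip x y ^+ 2 <= qn x * qn y.
Proof.
have [y0|yn0] := eqVneq (qn y) 0.
  move/qn_eq0: (y0) => ->.
  by rewrite /ip big1 ?expr0n ?mulr_ge0 ?qn_ge0 // => i _; rewrite mxE mulr0.
have yp : 0 < qn y by rewrite lt_def yn0 qn_ge0.
pose t := ip x y / qn y.
have key : qn (x - t *: y) = qn x - ip x y ^+ 2 / qn y.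
  rewrite /qn ipBl !ipBr !ipZl !ipZr (ipC y x) /t -/(qn y).
  by field.
have := qn_ge0 (x - t *: y); rewrite key subr_ge0 ler_pdivrMr //.
Qed.


Lemma ip_le x y : `|ip x y| <= en x * en y.
Proof.
rewrite -sqrtr_sqr /en -sqrtrM ?qn_ge0 //.
exact: ler_wsqrtr (CS x y).
Qed.

Lemma qnD x y : qn (x + y) = qn x + 2 * ip x y + qn y.
Proof. rewrite /qn ipDl !ipDr (ipC y x); lra. Qed.

Lemma en_triangle x y : en (x + y) <= en x + en y.
Proof.
have h : qn (x + y) <= (en x + en y) ^+ 2.
  rewrite qnD sqrrD !en_sqr.
  have := ler_norm (ip x y); have := ip_le x y.
  rewrite mulr2n; lra.
apply: le_trans (ler_wsqrtr h) _.
by rewrite sqrtr_sqr ger0_norm // addr_ge0 // en_ge0.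
Qed.

Lemma enZ a x : en (a *: x) = `|a| * en x.
Proof.
rewrite /en /qn ipZl ipZr mulrA -expr2 sqrtrM ?sqr_ge0 //.
by rewrite sqrtr_sqr.
Qed.

Lemma enN x : en (- x) = en x.
Proof. by rewrite -scaleN1r enZ normrN normr1 mul1r. Qed.

Lemma enB x y : en (x - y) = en (y - x).
Proof. by rewrite -opprB enN. Qed.

Lemma entry_en x i : `|x i 0| <= en x.
Proof.
have h : x i 0 ^+ 2 <= qn x.
  rewrite /qn /ip (bigD1 i) //= expr2 lerDl.
  by apply: sumr_ge0 => k _; rewrite -expr2 sqr_ge0.
by rewrite -sqrtr_sqr; exact: ler_wsqrtr h.
Qed.

Lemma norm_le_en x : `|x| <= en x.
Proof.
apply: mxnorm_le; first exact: en_ge0.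
by move=> i j; rewrite ord1; exact: entry_en.
Qed.

Lemma en_le_norm x : en x <= (1 + p%:R) * `|x|.
Proof.
have h1 : qn x <= p%:R * (`|x| * `|x|).
  apply: (@le_trans _ _ (\sum_(i < p) `|x| * `|x|)).
    apply: ler_sum => i _.
    apply: le_trans (ler_norm _) _; rewrite normrM.
    by apply: ler_pM; rewrite ?normr_ge0 // entry_le.
  by rewrite sumr_const card_ord mulr_natl.
have h2 : p%:R * (`|x| * `|x|) <= ((1 + p%:R) * `|x|) ^+ 2.
  have := normr_ge0 x; have : (0 : R) <= p%:R by [].
  move=> a b; nra.
apply: le_trans (ler_wsqrtr (le_trans h1 h2)) _.
by rewrite sqrtr_sqr ger0_norm // mulr_ge0 // addr_ge0.
Qed.

Definition bnd A e := forall y, en (A *m y) <= e * en y.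

Lemma frob_ge0 A : 0 <= frob A.
Proof. exact: sqrtr_ge0. Qed.

Lemma bnd_frob A : bnd A (frob A).
Proof.
move=> y.
pose r i := (row i A)^T.
have e1 i : (A *m y) i 0 = ip (r i) y.
  by rewrite !mxE; apply: eq_bigr => j _; rewrite !mxE.
have e2 i : qn (r i) = \sum_j A i j ^+ 2.
  by rewrite /qn /ip; apply: eq_bigr => j _; rewrite !mxE expr2.
have h : qn (A *m y) <= frob A ^+ 2 * qn y.
  rewrite /frob sqr_sqrtr; last first.
    by apply: sumr_ge0 => i _; apply: sumr_ge0 => j _; exact: sqr_ge0.
  rewrite mulr_suml; apply: ler_sum => i _.
  by rewrite e1 -expr2 -e2; exact: CS.
rewrite /en; apply: le_trans (ler_wsqrtr h) _.
by rewrite sqrtrM ?sqr_ge0 // sqrtr_sqr ger0_norm // frob_ge0.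
Qed.

Lemma bnd_mul A B a b : 0 <= a -> bnd A a -> bnd B b -> bnd (A *m B) (a * b).
Proof.
move=> a0 hA hB y; rewrite -mulmxA; apply: le_trans (hA _) _.
by rewrite -mulrA ler_wpM2l.
Qed.

Lemma bnd_le A a b : a <= b -> bnd A a -> bnd A b.
Proof.
move=> ab h y; apply: le_trans (h y) _.
by rewrite ler_wpM2r // en_ge0.
Qed.

Lemma proj_le v y : en (y - ((qn v)^-1 * ip v y) *: v) <= en y.
Proof.
have [v0|vn0] := eqVneq (qn v) 0.
  by rewrite v0 invr0 mul0r scale0r subr0.
have key : qn (y - ((qn v)^-1 * ip v y) *: v) = qn y - ip v y ^+ 2 / qn v.
  rewrite /qn ipBl !ipBr !ipZl !ipZr (ipC y v) -/(qn v).
  by field.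
apply: ler_wsqrtr; rewrite key lerBlDr lerDl.
by rewrite divr_ge0 ?sqr_ge0 ?qn_ge0.
Qed.

Lemma rank1_le v y w : v != 0 ->
  en (((qn v)^-1 * ip v y) *: w) <= en w / en v * en y.
Proof.
move=> vn0.
have qv : qn v != 0 by apply: contra vn0 => /eqP/qn_eq0 ->.
have ev : 0 < en v by rewrite lt_def sqrtr_ge0 andbT sqrtr_eq0 -ltNge lt_def qv qn_ge0.
rewrite enZ normrM ger0_norm ?invr_ge0 ?qn_ge0 //.
apply: le_trans (ler_wpM2r (en_ge0 w) (ler_wpM2l _ (ip_le v y))) _.
  by rewrite invr_ge0 qn_ge0.
rewrite -en_sqr le_eqVlt; apply/orP; left; apply/eqP; field.
by rewrite gt_eqF.
Qed.

Lemma mvvy v y : v *m v^T *m y = ip v y *: v.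
Proof.
rewrite -mulmxA (mx11_scalar (v^T *m y)) mul_mx_scalar; congr (_ *: _).
by rewrite mxE; apply: eq_bigr => i _; rewrite mxE.
Qed.

Lemma uvy (u v y : 'cV[R]_p) : u *m v^T *m y = ip v y *: u.
Proof.
rewrite -mulmxA (mx11_scalar (v^T *m y)) mul_mx_scalar; congr (_ *: _).
by rewrite mxE; apply: eq_bigr => i _; rewrite mxE.
Qed.

Lemma vtv v : (v^T *m v) 0 0 = qn v.
Proof. by rewrite mxE; apply: eq_bigr => i _; rewrite mxE. Qed.

Lemma Hupd (H Ji : 'M[R]_p) (u v y : 'cV[R]_p) :
  let c := ((v^T *m v) 0 0)^-1 in
  ((H - c *: (H *m (v *m v^T)) + c *: (u *m v^T)) - Ji) *m y =
  (H - Ji) *m (y - (c * ip v y) *: v) + (c * ip v y) *: (u - Ji *m v).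
Proof.
move=> c.
rewrite !mulmxDl !mulNmx -!scalemxAl -(mulmxA H) mvvy uvy -scalemxAr.
rewrite !mulmxDr !mulmxN ?mulmxDl ?mulNmx -!scalemxAr.
apply/matrixP => i j; rewrite !mxE; ring.
Qed.
End Euclid.

Section Deriv.
Variables (R : realType) (p : nat).

Lemma jacE (G : 'cV[R]_p -> 'cV[R]_p) z h : 'd G z h = jac G z *m h.
Proof.
apply/matrixP => i j; rewrite (ord1 j) {1}(matrix_sum_delta h) linear_sum summxE.
rewrite !mxE; apply: eq_bigr => k _.
rewrite linear_sum summxE big_ord1 linearZ !mxE mulrC.
by rewrite (ord1 (0 : 'I_1)).
Qed.

Lemma mvt_coord (G : 'cV[R]_p -> 'cV[R]_p) (x h : 'cV[R]_p) (i : 'I_p) :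
  (forall t : R, 0 <= t <= 1 -> differentiable G (t *: h + x)) ->
  exists2 t : R, 0 <= t <= 1 & (G (h + x) - G x) i 0 = (jac G (t *: h + x) *m h) i 0.
Proof.
move=> dG.
have @f : {linear 'cV[R]_p -> R}.
  by exists (fun N : 'cV[R]_p => N i 0); do 2![eexists]; do ?[constructor];
     rewrite ?mxE// => ? *; rewrite ?mxE//; move=> ?; rewrite !mxE.
have fc : continuous f by exact: coord_continuous.
pose l : R -> 'cV[R]_p := (fun t : R => t *: h) + cst x.
pose g := f \o (G \o l).
pose dg (t : R) := ('d G (t *: h + x) h) i 0.
have hg (t : R) : 0 <= t <= 1 -> is_diff t g (f \o ('d G (t *: h + x) \o ((fun s : R => s *: h) + 0))).
  move=> t01.
  have hl : is_diff t l ((fun s : R => s *: h) + 0) by apply: is_diffD.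
  have hG : is_diff (l t) G ('d G (l t)) by apply: differentiableP; exact: dG.
  have hf : is_diff (G (l t)) f f.
    apply: DiffDef; first exact/linear_differentiable.
    exact: diff_lin.
  by apply: is_diff_comp; apply: is_diff_comp.
have hd (t : R) : 0 <= t <= 1 -> is_derive t 1 g (dg t).
  move=> t01; have hgt := hg t t01.
  have -> : dg t = 'D_1 g t.
    rewrite deriveE; last exact: ex_diff.
    by rewrite diff_val /= /dg; congr (('d G _ _) i 0); rewrite /GRing.add /= addr0 scale1r.
  by apply: derivableP; apply: diff_derivable; exact: ex_diff.
have hder : forall t : R, t \in `]0, 1[%R -> is_derive t 1 g (dg t).
  by move=> t; rewrite in_itv /= => /andP[t0 t1]; apply: hd; rewrite !ltW.
have hcont : {within `[0, 1], continuous g}.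
  apply/continuous_in_subspaceT => t; rewrite inE /= in_itv /= => t01.
  have hgt := hg t t01; have dgt : differentiable g t by exact: ex_diff.
  by have := differentiable_continuous dgt.
have [c c01 hc] := MVT_segment ler01 hder hcont.
exists c; first by move: c01; rewrite in_itv.
have l1 : l 1 = h + x by rewrite /l /GRing.add /= scale1r.
have l0 : l 0 = x by rewrite /l /GRing.add /= scale0r add0r.
move: hc; rewrite /g /dg /= subr0 mulr1 l1 l0 => hc.
by rewrite -jacE -hc !mxE.
Qed.
End Deriv.

Section Core.
Variables (R : realType) (p : nat) (nv : 'cV[R]_p -> R) (F : 'cV[R]_p -> 'cV[R]_p)
  (xs : 'cV[R]_p) (J Ji : 'M[R]_p).
Variables (c1 c2 cJ cJi L d r0 tau : R).
Hypotheses (hnv : is_vnorm nv) (c1_gt0 : 0 < c1) (c2_gt0 : 0 < c2)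
  (hc1 : forall x, `|x| <= c1 * nv x) (hc2 : forall x, nv x <= c2 * `|x|)
  (hJJ : Ji *m J = 1%:M) (cJ_gt0 : 0 < cJ) (cJi_gt0 : 0 < cJi)
  (hcJ : forall y, nv (J *m y) <= cJ * nv y)
  (hcJi : forall y, nv (Ji *m y) <= cJi * nv y)
  (L_ge0 : 0 <= L) (d_gt0 : 0 < d) (r0_gt0 : 0 < r0)
  (hG1 : forall r x y, r <= r0 -> nv (x - xs) <= r -> nv (y - xs) <= r ->
     nv (resid F y - resid F x - J *m (y - x)) <= L * r `^ d * nv (y - x))
  (tau_ge0 : 0 <= tau) (tau_lt1 : tau < 1)
  (hC : forall x, nv (x - xs) <= r0 -> nv (F x - xs) <= tau * nv (x - xs))
  (hG0 : resid F xs = 0)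
  (hsmall1 : cJi * (L * r0 `^ d) <= 4^-1) (hsmall2 : L * r0 `^ d <= cJ).

Definition kap := c2 * ((1 + p%:R) * c1).
Definition Cst := (1 + p%:R) * c1 * (2 * cJi * cJi * L) * c2.

Lemma p1_ge0 : 0 <= 1 + p%:R :> R.
Proof. by rewrite addr_ge0. Qed.

Lemma kap_ge0 : 0 <= kap.
Proof. by rewrite /kap !mulr_ge0 ?p1_ge0 // ltW. Qed.

Lemma Cst_ge0 : 0 <= Cst.
Proof. by rewrite /Cst !mulr_ge0 ?p1_ge0 // ltW. Qed.

Lemma nv_en x : nv x <= c2 * en x.
Proof. by apply: le_trans (hc2 x) _; apply: ler_wpM2l; [exact: ltW | exact: norm_le_en]. Qed.

Lemma en_nv x : en x <= (1 + p%:R) * c1 * nv x.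
Proof.
apply: le_trans (en_le_norm x) _; rewrite -mulrA ler_wpM2l ?p1_ge0 //.
Qed.

Lemma bnd_nv A e y : 0 <= e -> bnd A e -> nv (A *m y) <= kap * e * nv y.
Proof.
move=> e0 hA; apply: le_trans (nv_en _) _.
apply: le_trans (ler_wpM2l (ltW c2_gt0) (hA y)) _.
apply: le_trans (ler_wpM2l (ltW c2_gt0) (ler_wpM2l e0 (en_nv y))) _.
by rewrite /kap le_eqVlt; apply/orP; left; apply/eqP; ring.
Qed.

Lemma powle rho : 0 <= rho -> rho <= r0 -> rho `^ d <= r0 `^ d.
Proof.
move=> h0 h1; apply: (ge0_ler_powR (ltW d_gt0)) => //; rewrite ?nnegrE //.
exact: le_trans h1.
Qed.

Lemma v_bound x : nv (x - xs) <= r0 -> x != xs ->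
  0 < nv (uvec F x) /\ nv (uvec F x) <= 2 * cJi * nv (vvec F x).
Proof.
move=> hr xn.
set rho := nv (x - xs).
have rho_pos : 0 < rho.
  rewrite lt_def nv_ge0 // andbT; apply/eqP => /(nv_eq0 hnv) /eqP.
  by rewrite subr_eq0 (negbTE xn).
have hF := hC hr.
have hu : rho <= nv (uvec F x) + tau * rho.
  have := nv_tri3 hnv x (F x) xs; rewrite (nvB hnv x (F x)) -/rho /uvec => h.
  by apply: le_trans h _; rewrite lerD2l.
have tr : tau * rho <= rho by rewrite -[leRHS]mul1r ler_wpM2r // ltW.
have u_pos : 0 < nv (uvec F x).
  have : 0 < (1 - tau) * rho by rewrite mulr_gt0 // subr_gt0.
  lra.
split => //.
have hG := @hG1 rho x (F x) hr (lexx _) (le_trans hF tr).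
set u := uvec F x; set v := vvec F x.
have hvu : nv (v - J *m u) <= L * rho `^ d * nv u by exact: hG.
have hJu : nv (J *m u) <= nv v + nv (v - J *m u).
  by have := nvD hnv v (J *m u - v); rewrite addrC subrK (nvB hnv (J *m u)).
have huJ : nv u <= cJi * nv (J *m u).
  by have := hcJi (J *m u); rewrite mulmxA hJJ mul1mx.
set P := cJi * (L * rho `^ d).
have P_ge0 : 0 <= P by apply: mulr_ge0; [exact: ltW | apply: mulr_ge0 => //; exact: powR_ge0].
have P_le : P <= 4^-1.
  apply: le_trans hsmall1; apply: ler_wpM2l; first exact: ltW.
  apply: ler_wpM2l => //; exact: powle (ltW rho_pos) hr.
have k1 : nv u <= cJi * nv v + P * nv u.
  apply: le_trans huJ _.
  have := ler_wpM2l (ltW cJi_gt0) (le_trans hJu (lerD (lexx (nv v)) hvu)).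
  by move=> h; apply: le_trans h _; rewrite /P le_eqVlt; apply/orP; left; apply/eqP; ring.
have k2 : P * nv u <= 4^-1 * nv u by apply: ler_wpM2r => //; exact: nv_ge0.
have k3 : 0 <= cJi * nv v by apply: mulr_ge0; [exact: ltW | exact: nv_ge0].
have -> : 2 * cJi * nv v = 2 * (cJi * nv v) by rewrite mulrA.
lra.
Qed.

Lemma v_ne0 x : nv (x - xs) <= r0 -> x != xs -> vvec F x != 0.
Proof.
move=> hr xn; have [h1 h2] := v_bound hr xn.
apply/eqP => v0; move: h2; rewrite v0 (nv0 hnv) mulr0.
by rewrite leNgt h1.
Qed.

Lemma vu_bound x : nv (x - xs) <= r0 ->
  nv (vvec F x - J *m uvec F x) <= L * nv (x - xs) `^ d * nv (uvec F x).
Proof.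
move=> hr; set rho := nv (x - xs).
have hF := hC hr.
have tr : tau * rho <= rho by rewrite -[leRHS]mul1r ler_wpM2r ?nv_ge0 // ltW.
exact: (@hG1 rho x (F x) hr (lexx _) (le_trans hF tr)).
Qed.

Lemma en_gt0 (v : 'cV[R]_p) : v != 0 -> 0 < en v.
Proof.
move=> vn0.
have qv : qn v != 0 by apply: contra vn0 => /eqP/qn_eq0 ->.
by rewrite lt_def sqrtr_ge0 andbT sqrtr_eq0 -ltNge lt_def qv qn_ge0.
Qed.

Lemma step_x x H eta : 0 <= eta -> kap * eta * (2 * cJ) <= 4^-1 ->
  bnd (H - Ji) eta -> nv (x - xs) <= r0 ->
  nv (xbar F x H - xs) <= nv (x - xs) / 2.
Proof.
move=> e0 he hb hr; set rho := nv (x - xs).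
have rho0 : 0 <= rho by exact: nv_ge0.
set g := resid F x - J *m (x - xs).
have hg : nv g <= L * rho `^ d * rho.
  have h0 : nv (xs - xs) <= rho by rewrite subrr (nv0 hnv).
  by have := @hG1 rho xs x hr h0 (lexx _); rewrite hG0 subr0.
have e : xbar F x H - xs = - (Ji *m g + (H - Ji) *m resid F x).
  rewrite /xbar /g (mulmxBr Ji) mulmxA hJJ mul1mx mulmxBl.
  by apply/matrixP => i j; rewrite !mxE; ring.
have hpow : L * rho `^ d <= L * r0 `^ d.
  by apply: ler_wpM2l => //; exact: powle.
have hGx : nv (resid F x) <= 2 * cJ * rho.
  have -> : resid F x = J *m (x - xs) + g by rewrite /g addrC subrK.
  apply: le_trans (nvD hnv _ _) _.
  have h3 : L * rho `^ d * rho <= cJ * rho.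
    by apply: ler_wpM2r => //; exact: le_trans hpow hsmall2.
  have := hcJ (x - xs); rewrite -/rho => h4.
  have -> : 2 * cJ * rho = cJ * rho + cJ * rho by ring.
  exact: lerD h4 (le_trans hg h3).
rewrite e (nvN hnv); apply: le_trans (nvD hnv _ _) _.
have h1 : nv (Ji *m g) <= 4^-1 * rho.
  apply: le_trans (hcJi g) _.
  apply: le_trans (ler_wpM2l (ltW cJi_gt0) hg) _.
  have -> : cJi * (L * rho `^ d * rho) = (cJi * (L * rho `^ d)) * rho by ring.
  apply: ler_wpM2r => //; apply: le_trans hsmall1.
  by apply: ler_wpM2l => //; exact: ltW.
have h2 : nv ((H - Ji) *m resid F x) <= 4^-1 * rho.
  apply: le_trans (bnd_nv _ e0 hb) _.
  have ke : 0 <= kap * eta by apply: mulr_ge0 => //; exact: kap_ge0.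
  apply: le_trans (ler_wpM2l ke hGx) _.
  have -> : kap * eta * (2 * cJ * rho) = (kap * eta * (2 * cJ)) * rho by ring.
  by apply: ler_wpM2r.
lra.
Qed.

Lemma step_H x H eta : 0 <= eta -> bnd (H - Ji) eta -> nv (x - xs) <= r0 ->
  bnd (Hbar F x H - Ji) (eta + Cst * nv (x - xs) `^ d).
Proof.
move=> e0 hb hr.
have hext : 0 <= Cst * nv (x - xs) `^ d by apply: mulr_ge0; [exact: Cst_ge0 | exact: powR_ge0].
have [xe|xn] := eqVneq x xs.
  have Fxs : F xs = xs by apply/eqP; rewrite -subr_eq0; apply/eqP; exact: hG0.
  have hv : vvec F xs = 0 by rewrite /vvec Fxs subrr.
  subst x; have -> : Hbar F xs H = H.
    by rewrite /Hbar /= hv trmx0 !mulmx0 !scaler0 subr0 addr0.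
  by apply: bnd_le hb; rewrite lerDl.
move=> y.
set rho := nv (x - xs).
have hu := Hupd H Ji (uvec F x) (vvec F x) y; cbv zeta in hu.
rewrite /Hbar /=; rewrite hu vtv.
set u := uvec F x; set v := vvec F x.
have [upos uv] := v_bound hr xn.
have vn0 : vvec F x != 0 by exact: v_ne0.
have ev := en_gt0 vn0.
apply: le_trans (en_triangle _ _) _.
rewrite mulrDl; apply: lerD.
  apply: le_trans (hb _) _; apply: ler_wpM2l => //; exact: proj_le.
apply: le_trans (rank1_le _ _ vn0) _.
apply: ler_wpM2r; first exact: en_ge0.
rewrite ler_pdivrMr //.
have hw : u - Ji *m v = - (Ji *m (v - J *m u)).
  move: (u) (v) => a b.
  by rewrite (mulmxBr Ji) mulmxA hJJ mul1mx opprB.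
rewrite hw enN.
apply: le_trans (en_nv _) _.
have h1 : nv (Ji *m (v - J *m u)) <= cJi * (L * rho `^ d * (2 * cJi * nv v)).
  apply: le_trans (hcJi _) _; apply: ler_wpM2l; first exact: ltW.
  apply: le_trans (vu_bound hr) _; apply: ler_wpM2l => //.
  by apply: mulr_ge0 => //; exact: powR_ge0.
have h2 : nv v <= c2 * en v by exact: nv_en.
have a0 : 0 <= (1 + p%:R) * c1 by apply: mulr_ge0; [exact: p1_ge0 | exact: ltW].
apply: le_trans (ler_wpM2l a0 h1) _.
have b0 : 0 <= (1 + p%:R) * c1 * cJi * (L * rho `^ d) * (2 * cJi).
  apply: mulr_ge0; last by apply: mulr_ge0 => //; exact: ltW.
  apply: mulr_ge0; last by apply: mulr_ge0 => //; exact: powR_ge0.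
  by apply: mulr_ge0 => //; exact: ltW.
have -> : (1 + p%:R) * c1 * (cJi * (L * rho `^ d * (2 * cJi * nv v))) =
  ((1 + p%:R) * c1 * cJi * (L * rho `^ d) * (2 * cJi)) * nv v by ring.
apply: le_trans (ler_wpM2l b0 h2) _.
by rewrite /Cst le_eqVlt; apply/orP; left; apply/eqP; ring.
Qed.
End Core.

Section Aux.
Variables (R : realType) (p : nat) (nv : 'cV[R]_p -> R).
Hypothesis hnv : is_vnorm nv.
Variables (c1 c2 : R).
Hypotheses (c1_gt0 : 0 < c1) (c2_gt0 : 0 < c2)
  (hc1 : forall x, `|x| <= c1 * nv x) (hc2 : forall x, nv x <= c2 * `|x|).

Lemma nbhs_nvball (xs : 'cV[R]_p) (A : set 'cV[R]_p) :
  nbhs xs A -> exists2 r, 0 < r & forall x, nv (x - xs) <= r -> A x.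
Proof.
move/nbhs_normP => [e e0 he].
exists (e / (2 * c1)); first by rewrite divr_gt0 // mulr_gt0.
move=> x hx; apply: he => /=.
rewrite -normrN opprB; apply: le_lt_trans (hc1 _) _.
apply: le_lt_trans (ler_wpM2l (ltW c1_gt0) hx) _.
have -> : c1 * (e / (2 * c1)) = e / 2 by field; rewrite gt_eqF.
by rewrite ltr_pdivrMr // ltr_pMr // ltr1n.
Qed.

Lemma nvball_nbhs (xs : 'cV[R]_p) (r : R) : 0 < r ->
  nbhs xs [set x | nv (x - xs) < r].
Proof.
move=> r0; rewrite -nbhs_nbhs_norm; exists (r / c2); first by apply: divr_gt0.
move=> y /= hy; apply: le_lt_trans (hc2 _) _.
by rewrite -normrN opprB mulrC -ltr_pdivlMr.
Qed.

Hypothesis p_gt0 : (0 < p)%N.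

Lemma opnorm_le (A : 'M[R]_p) y : nv (A *m y) <= opnorm nv A * nv y.
Proof.
set S := [set nv (A *m x) | x in [set x | nv x = 1]].
have hb : forall z, S z -> z <= kap p c1 c2 * frob A.
  move=> _ [x x1 <-]; have := bnd_nv c2_gt0 hc1 hc2 x (frob_ge0 A) (bnd_frob A).
  by rewrite x1 mulr1.
pose z0 : 'cV[R]_p := const_mx 1.
have z0n : z0 != 0.
  apply/eqP => /matrixP /(_ (Ordinal p_gt0) 0); rewrite !mxE => /eqP.
  by rewrite oner_eq0.
have nz0 : 0 < nv z0.
  rewrite lt_def nv_ge0 // andbT; apply/eqP => /(nv_eq0 hnv) /eqP.
  by rewrite (negbTE z0n).
have hS : has_sup S.
  split; last by exists (kap p c1 c2 * frob A) => z hz; exact: hb.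
  exists (nv (A *m ((nv z0)^-1 *: z0))); exists ((nv z0)^-1 *: z0) => //=.
  by rewrite (nvZ hnv) ger0_norm ?invr_ge0 ?ltW // mulVf // gt_eqF.
have [->|yn0] := eqVneq y 0.
  by rewrite mulmx0 (nv0 hnv) mulr0.
have ny : 0 < nv y.
  rewrite lt_def nv_ge0 // andbT; apply/eqP => /(nv_eq0 hnv) /eqP.
  by rewrite (negbTE yn0).
have hz : S (nv (A *m ((nv y)^-1 *: y))).
  exists ((nv y)^-1 *: y) => //=.
  by rewrite (nvZ hnv) ger0_norm ?invr_ge0 ?ltW // mulVf // gt_eqF.
have := sup_upper_bound hS hz.
have niy : 0 <= (nv y)^-1 by rewrite invr_ge0 ltW.
rewrite -scalemxAr (nvZ hnv) ger0_norm // => h.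
have -> : nv (A *m y) = nv y * ((nv y)^-1 * nv (A *m y)) by rewrite mulrA mulfV ?gt_eqF // mul1r.
by rewrite mulrC; apply: ler_wpM2r; [exact: ltW | exact: h].
Qed.

Lemma conv_ball (xs x y : 'cV[R]_p) (r t : R) :
  nv (x - xs) <= r -> nv (y - xs) <= r -> 0 <= t <= 1 ->
  nv (t *: (y - x) + x - xs) <= r.
Proof.
move=> hx hy /andP[t0 t1].
have -> : t *: (y - x) + x - xs = t *: (y - xs) + (1 - t) *: (x - xs).
  by apply/matrixP => i j; rewrite !mxE; ring.
apply: le_trans (nvD hnv _ _) _.
rewrite !(nvZ hnv) !ger0_norm ?subr_ge0 //.
have := ler_wpM2l t0 hy; have : 0 <= 1 - t by rewrite subr_ge0.
move=> h1t h1; have := ler_wpM2l h1t hx; lra.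
Qed.

Lemma G1_ex (F : 'cV[R]_p -> 'cV[R]_p) (xs : 'cV[R]_p) (D : set 'cV[R]_p) (d K : R) :
  open D -> D xs -> (forall x, D x -> differentiable (resid F) x) ->
  0 < d ->
  (forall x, D x ->
     opnorm nv (jac (resid F) x - jac (resid F) xs) <= K * nv (x - xs) `^ d) ->
  exists2 rD, 0 < rD & forall r x y, r <= rD -> nv (x - xs) <= r -> nv (y - xs) <= r ->
     nv (resid F y - resid F x - jac (resid F) xs *m (y - x))
       <= c2 * (c1 * `|K|) * r `^ d * nv (y - x).
Proof.
move=> Do Dxs Ddiff d0 hK.
have [rD rD0 hD] : exists2 r, 0 < r & forall x, nv (x - xs) <= r -> D x.
  by apply: nbhs_nvball; apply: open_nbhs_nbhs; split.
exists rD => // r x y hr hx hy.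
set J := jac (resid F) xs.
set h := y - x.
have hw : forall i, `|(resid F y - resid F x - J *m h) i 0| <= c1 * `|K| * r `^ d * nv h.
  move=> i.
  have dG : forall t : R, 0 <= t <= 1 -> differentiable (resid F) (t *: h + x).
    move=> t t01; apply: Ddiff; apply: hD.
    exact: le_trans (conv_ball hx hy t01) hr.
  have [t t01 ht] := mvt_coord i dG.
  move: ht; rewrite /h subrK => ht.
  set z := t *: (y - x) + x.
  have hz : nv (z - xs) <= r by exact: conv_ball.
  have Dz : D z by apply: hD; exact: le_trans hz hr.
  have -> : (resid F y - resid F x - J *m h) i 0 = ((jac (resid F) z - J) *m h) i 0.
    by rewrite [LHS]mxE ht mulmxBl [RHS]mxE !mxE.
  apply: le_trans (entry_le _ _ _) _.
  apply: le_trans (hc1 _) _.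
  apply: le_trans (ler_wpM2l (ltW c1_gt0) (opnorm_le _ _)) _.
  rewrite -!mulrA; apply: ler_wpM2l; first exact: ltW.
  rewrite mulrA; apply: ler_wpM2r; first exact: nv_ge0.
  apply: le_trans (hK _ Dz) _.
  apply: le_trans (ler_norm _) _; rewrite normrM (ger0_norm (powR_ge0 _ _)).
  apply: ler_wpM2l => //.
  apply: (ge0_ler_powR (ltW d0)) => //; rewrite ?nnegrE ?nv_ge0 //.
  exact: le_trans (nv_ge0 hnv _) hz.
have hnw : `|resid F y - resid F x - J *m h| <= c1 * `|K| * r `^ d * nv h.
  apply: mxnorm_le; last by move=> i j; rewrite ord1; exact: hw.
  by rewrite !mulr_ge0 ?nv_ge0 ?powR_ge0 // ltW.
apply: le_trans (hc2 _) _.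
apply: le_trans (ler_wpM2l (ltW c2_gt0) hnw) _.
by rewrite le_eqVlt; apply/orP; left; apply/eqP; ring.
Qed.

Lemma small_r (d g b : R) : 0 < d -> 0 < g -> 0 < b ->
  exists2 r, 0 < r & r <= b /\ r `^ d <= g.
Proof.
move=> d0 g0 b0.
exists (Num.min b (g `^ d^-1)).
  by rewrite lt_min b0 powR_gt0.
split; first by rewrite ge_min lexx.
have h : Num.min b (g `^ d^-1) <= g `^ d^-1 by rewrite ge_min lexx orbT.
apply: le_trans (ge0_ler_powR (ltW d0) _ _ h) _.
- by rewrite nnegrE le_min (ltW b0) powR_ge0.
- by rewrite nnegrE powR_ge0.
by rewrite -powRrM mulVf ?gt_eqF // powRr1 // ltW.
Qed.
End Aux.

Unset Implicit Arguments.
Theorem theorem2 (R : realType) (p : nat) (p_ge1 : (1 <= p)%N)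
  (nv : 'cV[R]_p -> R) (F : 'cV[R]_p -> 'cV[R]_p) (xs : 'cV[R]_p)
  (D : set 'cV[R]_p) (d K mu2 : R) (M : 'M[R]_p)
  (N' : set ('cV[R]_p * 'M[R]_p)) :
  is_vnorm nv ->
  (* standing assumption: F is locally linearly convergent to xs *)
  (exists S : set 'cV[R]_p, exists tau : R,
     [/\ nbhs xs S, 0 < tau, tau < 1 &
         forall x, S x -> nv (F x - xs) <= tau * nv (x - xs)]) ->
  (* (A1) *)
  open D -> convex_set (D : set (convex_lmodType 'cV[R]_p)) -> D xs ->
  (forall x, D x -> differentiable (resid F) (x : 'cV[R]_p)) ->
  resid F xs = 0 ->
  jac (resid F) xs \in unitmx ->
  0 < d ->
  (forall x, D x ->
     opnorm nv (jac (resid F) x - jac (resid F) xs) <= K * nv (x - xs) `^ d) ->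
  (* condition on M *)
  0 <= mu2 -> M^T = M -> M \in unitmx ->
  nbhs ((xs, invmx (jac (resid F) xs)) : 'cV[R]_p * 'M[R]_p) N' ->
  (forall x H, N' (x, H) -> vvec F x != 0 ->
     nv (M *m vvec F x - invmx M *m vvec F x) / nv (invmx M *m vvec F x)
       <= mu2 * nv (vvec F x) `^ d) ->
  (* conclusion *)
  (exists N : set ('cV[R]_p * 'M[R]_p),
     nbhs ((xs, invmx (jac (resid F) xs)) : 'cV[R]_p * 'M[R]_p) N /\
     forall x H, N (x, H) -> x != xs -> vvec F x != 0)
  /\
  (exists eps delta : R, [/\ 0 < eps, 0 < delta &
     forall (x0 : 'cV[R]_p) (H0 : 'M[R]_p),
       nv (x0 - xs) < eps ->
       Mnorm M (H0 - invmx (jac (resid F) xs)) < delta ->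
       (forall k, (iterQN F x0 H0 k).1 != xs -> vvec F (iterQN F x0 H0 k).1 != 0) /\
       (fun k => nv ((iterQN F x0 H0 k).1 - xs)) @ \oo --> (0 : R)]).
Proof.
move=> hnv hS Do Dconv Dxs Ddiff hG0 hJ d0 hK mu0 MT Mu hN' hMcond.
have p_gt0 : (0 < p)%N := p_ge1.
have [c1 c1_gt0 hc1] := nv_low hnv p_gt0.
have [c2 c2_gt0 hc2] := nv_up hnv.
set J := jac (resid F) xs.
set Ji := invmx J.
have hJJ : Ji *m J = 1%:M := mulVmx hJ.
have kap0 : 0 <= kap p c1 c2 by exact: kap_ge0.
pose cJ := kap p c1 c2 * frob J + 1.
pose cJi := kap p c1 c2 * frob Ji + 1.
have cJ_gt0 : 0 < cJ by have := mulr_ge0 kap0 (frob_ge0 J); rewrite /cJ; lra.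
have cJi_gt0 : 0 < cJi by have := mulr_ge0 kap0 (frob_ge0 Ji); rewrite /cJi; lra.
have hcJ : forall y, nv (J *m y) <= cJ * nv y.
  move=> y; apply: le_trans (bnd_nv c2_gt0 hc1 hc2 y (frob_ge0 J) (bnd_frob J)) _.
  by apply: ler_wpM2r; [exact: nv_ge0 | rewrite /cJ lerDl].
have hcJi : forall y, nv (Ji *m y) <= cJi * nv y.
  move=> y; apply: le_trans (bnd_nv c2_gt0 hc1 hc2 y (frob_ge0 Ji) (bnd_frob Ji)) _.
  by apply: ler_wpM2r; [exact: nv_ge0 | rewrite /cJi lerDl].
pose L := c2 * (c1 * `|K|).
have L_ge0 : 0 <= L by apply: mulr_ge0; [exact: ltW | apply: mulr_ge0 => //; exact: ltW].
have [rD rD0 hG1D] := G1_ex hnv c1_gt0 c2_gt0 hc1 hc2 p_gt0 Do Dxs Ddiff d0 hK.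
have [S [tau [hSn tau0 tau1 hSc]]] := hS.
have [rS rS0 hrS] := nbhs_nvball c1_gt0 hc1 hSn.
pose ga := (4 * cJi * (L + 1))^-1.
have ga0 : 0 < ga by rewrite invr_gt0; apply: mulr_gt0; [apply: mulr_gt0 => // | lra].
pose gb := cJ / (L + 1).
have gb0 : 0 < gb by apply: divr_gt0 => //; lra.
have rDS0 : 0 < Num.min rD rS by rewrite lt_min rD0.
have [ra ra0 [raDS ra_s]] := small_r d0 ga0 rDS0.
have [r0 r00 [r0a r0_s]] := small_r d0 gb0 ra0.
have r0D : r0 <= rD by apply: le_trans r0a (le_trans raDS _); rewrite ge_min lexx.
have r0S : r0 <= rS by apply: le_trans r0a (le_trans raDS _); rewrite ge_min lexx orbT.
have r0ga : r0 `^ d <= ga.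
  apply: le_trans ra_s; apply: (ge0_ler_powR (ltW d0)) => //; rewrite nnegrE ltW //.
have hsmall1 : cJi * (L * r0 `^ d) <= 4^-1.
  have h1 : L * r0 `^ d <= (L + 1) * ga.
    apply: le_trans (ler_wpM2l L_ge0 r0ga) _.
    by apply: ler_wpM2r; [exact: ltW | rewrite lerDl].
  apply: le_trans (ler_wpM2l (ltW cJi_gt0) h1) _.
  rewrite /ga le_eqVlt; apply/orP; left; apply/eqP; field.
  by rewrite !gt_eqF //; lra.
have hsmall2 : L * r0 `^ d <= cJ.
  have h1 : L * r0 `^ d <= (L + 1) * gb.
    apply: le_trans (ler_wpM2l L_ge0 r0_s) _.
    by apply: ler_wpM2r; [exact: ltW | rewrite lerDl].
  apply: le_trans h1 _; rewrite /gb le_eqVlt; apply/orP; left; apply/eqP; field.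
  by rewrite gt_eqF //; lra.
have hG1 : forall r x y, r <= r0 -> nv (x - xs) <= r -> nv (y - xs) <= r ->
     nv (resid F y - resid F x - J *m (y - x)) <= L * r `^ d * nv (y - x).
  by move=> r x y hr; apply: hG1D; exact: le_trans hr r0D.
have hC : forall x, nv (x - xs) <= r0 -> nv (F x - xs) <= tau * nv (x - xs).
  by move=> x hx; apply: hSc; apply: hrS; exact: le_trans hx r0S.
have SX := step_x hnv c1_gt0 c2_gt0 hc1 hc2 hJJ cJi_gt0 hcJ hcJi L_ge0 d0 hG1 hG0 hsmall1 hsmall2.
have SH := step_H hnv c1_gt0 c2_gt0 hc1 hc2 hJJ cJi_gt0 hcJi L_ge0 d0 hG1 tau1 hC hG0 hsmall1.
have VN := v_ne0 hnv hJJ cJi_gt0 hcJi L_ge0 d0 hG1 tau1 hC hsmall1.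
split.
  exists [set xH | nv (xH.1 - xs) < r0]; split.
    exists ([set x | nv (x - xs) < r0], setT).
      split => /=; [exact: (nvball_nbhs c2_gt0 hc2 xs r00) | exact: filterT].
    by move=> [x H] [/= hx _].
  by move=> x H /= hx xn; apply: VN => //; exact: ltW.
pose kp := kap p c1 c2.
have kp0 : 0 <= kp := kap0.
pose etas := (8 * (kp + 1) * cJ)^-1.
have etas0 : 0 < etas.
  by rewrite invr_gt0; apply: mulr_gt0 => //; apply: mulr_gt0 => //; lra.
have hsmf : forall eta, 0 <= eta -> eta <= etas -> kp * eta * (2 * cJ) <= 4^-1.
  move=> eta e0 e1.
  have h1 : kp * eta <= (kp + 1) * etas.
    by apply: ler_pM => //; lra.
  apply: le_trans (ler_wpM2r _ h1) _; first by apply: mulr_ge0 => //; exact: ltW.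
  rewrite /etas le_eqVlt; apply/orP; left; apply/eqP; field.
  by rewrite !gt_eqF //; lra.
pose beta := (2^-1 : R) `^ d.
have beta0 : 0 <= beta by exact: powR_ge0.
have beta1 : beta < 1.
  have e1 : (1 : R) `^ d = 1 by rewrite powR1.
  rewrite /beta -[X in _ < X]e1; apply: (gt0_ltr_powR d0); rewrite ?nnegrE //.
  by rewrite invf_lt1 // ltr1n.
pose C := Cst p c1 c2 cJi L.
have C0 : 0 <= C.
  rewrite /C /Cst; apply: mulr_ge0; last exact: ltW.
  apply: mulr_ge0; first by apply: mulr_ge0; [rewrite addr_ge0 | exact: ltW].
  apply: mulr_ge0 => //; apply: mulr_ge0; last exact: ltW.
  by apply: mulr_ge0 => //; exact: ltW.
pose C' := C / (1 - beta).
have C'0 : 0 <= C' by apply: divr_ge0 => //; lra.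
pose Mi := invmx M.
pose m := frob Mi.
have m0 : 0 <= m by exact: frob_ge0.
pose delta := etas / (2 * (m * m + 1)).
have delta0 : 0 < delta.
  apply: divr_gt0 => //; apply: mulr_gt0 => //; have := mulr_ge0 m0 m0; lra.
pose ge := etas / (2 * (C' + 1)).
have ge0 : 0 < ge by apply: divr_gt0 => //; lra.
have [eps eps0 [epsr0 eps_s]] := small_r d0 ge0 r00.
exists eps, delta; split => // x0 H0 hx0 hH0.
set B := M *m (H0 - Ji) *m M.
have eB : H0 - Ji = Mi *m B *m Mi.
  by rewrite /B !mulmxA mulVmx // mul1mx -mulmxA mulmxV // mulmx1.
pose eta0 := m * frob B * m.
have hb0 : bnd (H0 - Ji) eta0.
  rewrite eB; apply: bnd_mul; first by apply: mulr_ge0 => //; exact: frob_ge0.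
    by apply: bnd_mul => //; exact: bnd_frob.
  exact: bnd_frob.
have eta00 : 0 <= eta0 by rewrite /eta0; apply: mulr_ge0 => //; apply: mulr_ge0 => //; exact: frob_ge0.
have hBd : frob B < delta := hH0.
have eta0le : eta0 <= etas / 2.
  have h1 : eta0 <= m * delta * m.
    by apply: ler_wpM2r => //; apply: ler_wpM2l => //; exact: ltW.
  have e2 : m * delta * m = etas / 2 - etas / (2 * (m * m + 1)).
    rewrite /delta; field; have := mulr_ge0 m0 m0; move=> hm.
    by rewrite gt_eqF //; lra.
  have h3 : 0 <= etas / (2 * (m * m + 1)) by exact: ltW.
  lra.
pose Phi := eta0 + C' * eps `^ d.
have Phi_le : Phi <= etas.
  have h1 : C' * eps `^ d <= C' * ge by apply: ler_wpM2l.
  have e2 : C' * ge = etas / 2 - etas / (2 * (C' + 1)).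
    rewrite /ge; field.
    by rewrite gt_eqF //; lra.
  have h3 : 0 <= etas / (2 * (C' + 1)) by exact: ltW.
  rewrite /Phi; lra.
have inv : forall k, exists eta, [/\ 0 <= eta, bnd ((iterQN F x0 H0 k).2 - Ji) eta,
    nv ((iterQN F x0 H0 k).1 - xs) <= r0 &
    eta + C' * nv ((iterQN F x0 H0 k).1 - xs) `^ d <= Phi].
  elim => [|k [eta [e0 hb hr hphi]]].
    exists eta0; split => //=; first exact: ltW (lt_le_trans hx0 epsr0).
    rewrite /Phi lerD2l; apply: ler_wpM2l => //.
    apply: (ge0_ler_powR (ltW d0)); rewrite ?nnegrE ?nv_ge0 //; exact: ltW.
  have rh0 : 0 <= nv ((iterQN F x0 H0 k).1 - xs) by exact: nv_ge0.
  have pw0 : 0 <= nv ((iterQN F x0 H0 k).1 - xs) `^ d by exact: powR_ge0.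
  have eS : eta <= etas.
    have := mulr_ge0 C'0 pw0; lra.
  have hx' := SX _ _ _ e0 (hsmf _ e0 eS) hb hr.
  have hH' := SH _ _ _ e0 hb hr.
  exists (eta + C * nv ((iterQN F x0 H0 k).1 - xs) `^ d); split => /=.
  - by apply: addr_ge0 => //; apply: mulr_ge0.
  - exact: hH'.
  - apply: le_trans hx' _; apply: le_trans hr; lra.
  - set rho := nv ((iterQN F x0 H0 k).1 - xs) in rh0 pw0 hx' hr hphi *.
    set rho' := nv (xbar F _ _ - xs) in hx' *.
    have h1 : rho' `^ d <= rho `^ d * beta.
      apply: le_trans (ge0_ler_powR (ltW d0) _ _ hx') _; rewrite ?nnegrE ?nv_ge0 //.
        by apply: divr_ge0.
      by rewrite powRM // invr_ge0.
    have h2 : C' * rho' `^ d <= C' * (rho `^ d * beta) by apply: ler_wpM2l.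
    have e3 : C * rho `^ d + C' * (rho `^ d * beta) = C' * rho `^ d.
      rewrite /C'; field; rewrite subr_eq0; apply/eqP => hb1.
      by move: beta1; rewrite hb1 ltxx.
    lra.
split.
  move=> k xn; have [eta [_ _ hr _]] := inv k; exact: VN _ hr xn.
have hdec : forall k, nv ((iterQN F x0 H0 k.+1).1 - xs) <= nv ((iterQN F x0 H0 k).1 - xs) / 2.
  move=> k; have [eta [e0 hb hr hphi]] := inv k.
  have pw0 : 0 <= nv ((iterQN F x0 H0 k).1 - xs) `^ d by exact: powR_ge0.
  have eS : eta <= etas by have := mulr_ge0 C'0 pw0; lra.
  exact: (SX _ _ _ e0 (hsmf _ e0 eS) hb hr).
have hgeo : forall k, nv ((iterQN F x0 H0 k).1 - xs) <= r0 * (2^-1) ^+ k.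
  elim => [|k IH]; first by rewrite expr0 mulr1; have [eta [_ _ hr _]] := inv 0%N.
  apply: le_trans (hdec k) _.
  apply: le_trans (ler_wpM2r _ IH) _; first by rewrite invr_ge0.
  by rewrite exprS le_eqVlt; apply/orP; left; apply/eqP; ring.
apply: (@squeeze_cvgr _ _ _ _ (fun=> 0) (fun k => r0 * (2^-1) ^+ k)).
- by near=> k; apply/andP; split; [exact: nv_ge0 | exact: hgeo].
- exact: cvg_cst.
- rewrite -[X in _ --> X](mulr0 r0); apply: cvgMl_tmp; apply: cvg_expr.
  by rewrite ger0_norm ?invr_ge0 // invf_lt1 // ltr1n.
Unshelve. all: by end_near.
Qed.
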